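(* Let $k,r,h$ be positive integers such that $\ell=\frac{k+h}{r}$ is an integer, and let $a,b$ be positive integers with $\mathbb{F}_{2^a}\subseteq\mathbb{F}_{2^b}$. Suppose there is a set $S_1=\{\xi_1,\ldots,\xi_{r+1}\}\subseteq\mathbb{F}_{2^a}$ of size $r+1$ which is $h$-wise weakly independent over $\mathbb{F}_2$ if $h$ is even, and $(h+1)$-wise weakly independent over $\mathbb{F}_2$ if $h$ is odd. Suppose further there is a set $S_2=\{\lambda_1,\ldots,\lambda_\ell\}\subseteq\mathbb{F}_{2^b}$ of size $\ell$ that is $h$-wise independent over $\mathbb{F}_{2^a}$. Set $\alpha_{i,s}=\lambda_i\xi_s$ for $i\in[\ell]$, $s\in[r+1]$. Then the code $\mathcal{C}\subseteq\mathbb{F}_{2^b}^{\ell(r+1)}$ consisting of all $(x_{i,s})_{i\in[\ell],s\in[r+1]}$ satisfying $\sum_{i=1}^{\ell}\sum_{s=1}^{r+1}\alpha_{i,s}^{2^{j-1}}x_{i,s}=0$ for $j=1,\ldots,h$ and $\sum_{s=1}^{r+1}x_{i,s}=0$ for $i=1,\ldots,\ell$ is a maximally recoverable local $(k,r,h)$-code over $\mathbb{F}_{2^b}$, whose local groups are the sets $\{(i,s):s\in[r+1]\}$, $i\in[\ell]$.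
   Context: A set $S\subseteq\mathbb{F}$ is $t$-wise weakly independent over $\mathbb{F}_2$ if no subset $T\subseteq S$ with $2\le|T|\le t$ has sum of its elements equal to $0$ (such a set may contain $0$). A set $S\subseteq\mathbb{F}$ is $t$-wise independent over a subfield $\mathbb{F}'$ if every subset of size at most $t$ is linearly independent over $\mathbb{F}'$. For positive integers $k,r,h$ with $r\mid(k+h)$, a local $(k,r,h)$-code over a finite field $\mathbb{F}$ is a linear systematic code of dimension $k$ and length $k+h+\frac{k+h}{r}$ consisting of $k$ data symbols, $h$ heavy parity symbols (each a linear combination of all data symbols), and, after partitioning the $k+h$ data and heavy symbols into groups of size $r$, one local parity per group equal to the sum of the group's symbols; a local group is such a group plus its local parity. The code is maximally recoverable if for every set $E$ of coordinates containing exactly one coordinate from each local group, puncturing the code in $E$ yields a maximum distance separable $[k+h,k]$ code (minimum distance $h+1$). *)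

(* Defs.v *)
From HB Require Import structures.
From mathcomp Require Import all_boot all_order all_algebra all_field.
Set Implicit Arguments. Unset Strict Implicit. Unset Printing Implicit Defensive.
Import GRing.Theory.
Local Open Scope ring_scope.

Definition weakly_indep (F : finFieldType) (t : nat) (S : {set F}) : Prop :=
  forall T : {set F}, T \subset S -> (2 <= #|T|)%N -> (#|T| <= t)%N ->
    \sum_(x in T) x != 0.

Definition wise_indep (F : fieldType) (L : fieldExtType F) (n t : nat)
    (lam : 'I_n -> L) : Prop :=
  forall T : {set 'I_n}, (#|T| <= t)%N -> free [seq lam i | i in T].

(* Coordinates of a code of length l*(r+1) are indexed as entries (i,s) of an
   l x (r+1) matrix; the local groups are the rows. *)
Definition weight (L : fieldType) (l m : nat) (x : 'M[L]_(l, m)) : nat :=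
  #|[set c : 'I_l * 'I_m | x c.1 c.2 != 0]|.

Definition min_dist (L : fieldType) (l m : nat) (U : {vspace 'M[L]_(l, m)})
    (d : nat) : Prop :=
  (exists y, y \in U /\ y != 0 /\ weight y = d) /\
  (forall y, y \in U -> y != 0 -> (d <= weight y)%N).

(* C is a local (k,r,h)-code whose local groups are the rows
   {(i,s) : s in [r+1]}, i in [l]: l*r = k+h, C is linear (a subspace) of
   dimension k, in each row i there is a local-parity coordinate p i equal to the
   sum of the other r symbols of the row; the remaining k+h coordinates consist
   of a set D of k data coordinates (systematic: every assignment of the data
   symbols extends uniquely to a codeword) and h heavy parities, each a linear
   combination of the data symbols. *)
Definition local_code (L : fieldType) (k r h l : nat)
    (C : {vspace 'M[L]_(l, r.+1)}) : Prop :=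
  (l * r = k + h)%N /\ \dim C = k /\
  exists (p : 'I_l -> 'I_r.+1) (D : {set 'I_l * 'I_r.+1}),
    #|D| = k /\
    (forall c, c \in D -> c.2 != p c.1) /\
    (forall y : 'M[L]_(l, r.+1), exists! x,
        x \in C /\ forall c, c \in D -> x c.1 c.2 = y c.1 c.2) /\
    (forall c : 'I_l * 'I_r.+1, c \notin D -> c.2 != p c.1 ->
        exists w : 'I_l * 'I_r.+1 -> L, forall x, x \in C ->
          x c.1 c.2 = \sum_(d in D) w d * x d.1 d.2) /\
    (forall x, x \in C -> forall i, x i (p i) = \sum_(s | s != p i) x i s).

(* Puncturing C in E (one coordinate E i from each row i): the deleted
   coordinates are represented by zero entries, so weights are unchanged. *)
Definition puncture (L : fieldType) (l m : nat) (E : 'I_l -> 'I_m)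
    (x : 'M[L]_(l, m)) : 'M[L]_(l, m) :=
  \matrix_(i, s) (if s == E i then 0 else x i s).

(* Maximally recoverable local (k,r,h)-code (local groups = rows): for every E
   with exactly one coordinate in each local group, the punctured code is an
   MDS [k+h,k] code, i.e. has dimension k and minimum distance h+1. *)
Definition MR_local_code (L : fieldType) (k r h l : nat)
    (C : {vspace 'M[L]_(l, r.+1)}) : Prop :=
  @local_code L k r h l C /\
  forall E : 'I_l -> 'I_r.+1,
    exists P : {vspace 'M[L]_(l, r.+1)},
      (forall y, y \in P <-> exists2 x, x \in C & y = puncture E x) /\
      \dim P = k /\ min_dist P h.+1.
Arguments MR_local_code {L} k r h {l} C.

(* Main.v *)
Require Import Defs.
From HB Require Import structures.
From mathcomp Require Import all_boot all_order all_algebra all_field.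
From mathcomp Require Import zify.
Import GRing.Theory.
Local Open Scope ring_scope.

Lemma frob2 (L : nzRingType) (j : nat) (x y : L) : 2%N \in [pchar L] ->
  GRing.comm x y ->
  (x + y) ^+ (2 ^ j) = x ^+ (2 ^ j) + y ^+ (2 ^ j).
Proof.
move=> ch cxy; elim: j x y cxy => [|j IH] x y cxy; first by rewrite !expr1.
rewrite expnSr !exprM IH // expr2 mulrDl !mulrDr -!expr2.
have -> : y ^+ (2 ^ j) * x ^+ (2 ^ j) = x ^+ (2 ^ j) * y ^+ (2 ^ j).
  by apply/esym; apply: commrX; apply/esym; apply: commrX.
set a := x ^+ (2 ^ j) * x ^+ (2 ^ j); set b := x ^+ (2 ^ j) * y ^+ (2 ^ j).
by rewrite -addrA (addrA b b) (addrr_pchar2 ch) add0r.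
Qed.

Section Frob.
Variable (L : comNzRingType).
Hypothesis ch : 2%N \in [pchar L].

Lemma frobD j (x y : L) : (x + y) ^+ (2 ^ j) = x ^+ (2 ^ j) + y ^+ (2 ^ j).
Proof. by apply: frob2 => //; apply: mulrC. Qed.

Lemma frobM j (x y : L) : (x * y) ^+ (2 ^ j) = x ^+ (2 ^ j) * y ^+ (2 ^ j).
Proof. exact: exprMn. Qed.

Lemma frob_sum j (I : Type) (r : seq I) (P : pred I) (f : I -> L) :
  (\sum_(i <- r | P i) f i) ^+ (2 ^ j) = \sum_(i <- r | P i) f i ^+ (2 ^ j).
Proof.
apply: (big_morph (fun x => x ^+ (2 ^ j))); first exact: frobD.
by rewrite expr0n expn_eq0.
Qed.
End Frob.

Section Moore.
Variable (L : fieldType).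
Hypothesis ch : 2%N \in [pchar L].

Lemma moore (m : nat) (beta : 'I_m -> L) :
  (forall U : {set 'I_m}, U != set0 -> \sum_(t in U) beta t != 0) ->
  forall c : 'I_m -> L,
  (forall j : 'I_m, \sum_t c t * beta t ^+ (2 ^ j) = 0) -> forall t, c t = 0.
Proof.
move=> indep c hc.
pose A : 'M[L]_m := \matrix_(j, t) beta t ^+ (2 ^ j).
have rowk : forall v : 'rV_m, v *m A = 0 -> v = 0.
  move=> v hv.
  pose P : {poly L} := \sum_(j < m) v 0 j *: 'X^(2 ^ j).
  have hP : forall x, P.[x] = \sum_(j < m) v 0 j * x ^+ (2 ^ j).
    move=> x; rewrite /P horner_sum; apply: eq_bigr => j _.
    by rewrite hornerZ hornerXn.
  have hPb : forall t, P.[beta t] = 0.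
    move=> t; rewrite hP; have := congr1 (fun M : 'rV_m => M 0 t) hv.
    rewrite !mxE => e; rewrite -[RHS]e; by apply: eq_bigr => j _; rewrite mxE.
  pose f (U : {set 'I_m}) := \sum_(t in U) beta t.
  have finj : injective f.
    move=> U V eqUV; apply/eqP; apply: contraT => neqUV.
    pose W := [set t | (t \in U) != (t \in V)].
    have : W != set0.
      apply: contra neqUV => /eqP W0; apply/eqP/setP => t.
      have : t \notin W by rewrite W0 inE.
      by rewrite inE negbK => /eqP.
    move/indep; suff -> : \sum_(t in W) beta t = 0 by rewrite eqxx.
    have -> : \sum_(t in W) beta t = f U + f V.
      rewrite /f !(big_mkcond (fun t => t \in _)) -big_split /=.
      apply: eq_bigr => t _; rewrite inE.
      by case: (t \in U); case: (t \in V); rewrite ?addr0 ?add0r ?(addrr_pchar2 ch).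
    by rewrite eqUV (addrr_pchar2 ch).
  pose rs := [seq f U | U in powerset [set: 'I_m]].
  have urs : uniq rs by rewrite map_inj_uniq // enum_uniq.
  have rrs : all (root P) rs.
    apply/allP => x /mapP [U _ ->]; apply/eqP.
    rewrite hP /f; under eq_bigr => j _ do rewrite (frob_sum _ ch) mulr_sumr.
    rewrite exchange_big /= big1 // => t _; rewrite -[RHS](hPb t) hP.
    by [].
  have sP : (size P <= 2 ^ m)%N.
    apply: leq_trans (size_sum _ _ _) _.
    apply/bigmax_leqP => j _.
    apply: leq_trans (size_scale_leq _ _) _.
    rewrite size_polyXn.
    have : (2 ^ j < 2 ^ m)%N by rewrite ltn_exp2l.
    by [].
  have P0 : P = 0.
    apply/eqP/negPn/negP => nP.
    have := max_poly_roots nP rrs urs.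
    rewrite size_map -cardE card_powerset cardsT card_ord.
    by rewrite ltnNge sP.
  apply/rowP => j; rewrite mxE.
  have : P`_(2 ^ j) = 0 by rewrite P0 coef0.
  rewrite /P coef_sum (bigD1 j) //= coefZ coefXn eqxx mulr1 big1 ?addr0 //.
  move=> i; rewrite -val_eqE /= => neq; rewrite coefZ coefXn eqn_exp2l // eq_sym (negbTE neq) mulr0 //.
have Au : A \in unitmx.
  rewrite -row_free_unit -kermx_eq0; apply/eqP/row_matrixP => i.
  rewrite row0; apply: rowk.
  by rewrite -row_mul mulmx_ker row0.
pose cv : 'cV_m := \col_t c t.
have Acv : A *m cv = 0.
  apply/colP => j; rewrite !mxE; rewrite -[RHS](hc j).
  by apply: eq_bigr => t _; rewrite !mxE mulrC.
have cv0 : cv = 0 by rewrite -(mulKmx Au cv) Acv mulmx0.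
by move=> t; have := congr1 (fun M : 'cV_m => M t 0) cv0; rewrite !mxE.
Qed.
End Moore.

Lemma moore_set (L : fieldType) (T : finType) (S : {set T}) (beta : T -> L) :
  2%N \in [pchar L] ->
  (forall U : {set T}, U \subset S -> U != set0 -> \sum_(t in U) beta t != 0) ->
  forall c : T -> L,
  (forall j : nat, (j < #|S|)%N -> \sum_(t in S) c t * beta t ^+ (2 ^ j) = 0) ->
  forall t, t \in S -> c t = 0.
Proof.
move=> ch indep c hc t tS.
suff H : forall q : 'I_#|S|, c (enum_val q) = 0.
  by have := H (enum_rank_in tS t); rewrite (enum_rankK_in tS tS).
apply: (@moore L ch #|S| (fun q => beta (enum_val q))).
- move=> U' nU'.
  have sub : [set enum_val q | q in U'] \subset S.
    by apply/subsetP => x /imsetP [q _ ->]; apply: enum_valP.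
  have ne : [set enum_val q | q in U'] != set0.
    move: nU'; apply: contra => /eqP e; apply/eqP/setP => q.
    rewrite inE; apply/negbTE; apply/negP => qU.
    have : enum_val q \in [set enum_val q0 | q0 in U'] by apply: imset_f.
    by rewrite e inE.
  have := indep _ sub ne.
  by rewrite big_imset //=; move=> x y _ _; apply: enum_val_inj.
- move=> j; rewrite -[RHS](hc j) ?ltn_ord //.
  by rewrite [RHS]big_enum_val.
Qed.

Lemma free_coef (K : fieldType) (V : vectType K) (I : finType) (f : I -> V)
    (T : {set I}) (e : I -> K) :
  free [seq f i | i in T] -> \sum_(i in T) e i *: f i = 0 ->
  forall i, i \in T -> e i = 0.
Proof.
move=> fr he i iT.
have /(@freeP _ _ _ (in_tuple _)) H := fr.
set s := enum T.
have iS : i \in s by rewrite mem_enum.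
have hi : (index i s < size [seq f i | i in T])%N by rewrite size_map index_mem.
suff hsum : \sum_(q < size [seq f i | i in T])
   (fun q => e (nth i s q)) q *: (in_tuple [seq f i0 | i0 in T])`_q = 0.
  by have := H _ hsum (Ordinal hi); rewrite /= nth_index.
rewrite -[RHS]he.
have -> : \sum_(i in T) e i *: f i = \sum_(j <- s) e j *: f j by rewrite big_enum.
rewrite [RHS](big_nth i) /=.
rewrite -(big_mkord xpredT (fun q => e (nth i s q) *: nth 0 [seq f i | i in T] q)).
rewrite size_map; apply: eq_big_nat => q /andP [_ hq]; by rewrite (nth_map i).
Qed.

Lemma exists_subset (T : finType) (A : {set T}) n :
  (n <= #|A|)%N -> exists B : {set T}, B \subset A /\ #|B| = n.
Proof.
elim: n => [|n IH] hn; first by exists set0; rewrite sub0set cards0.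
have [B [BA cB]] := IH (ltnW hn).
have : B \proper A by rewrite properEcard BA cB hn.
case/properP => _ [x xA xB]; exists (x |: B).
by rewrite subUset sub1set xA BA cardsU1 xB cB.
Qed.

Section Restr.
Variables (L : fieldType) (l m : nat).
Implicit Types (K : {set 'I_l * 'I_m}).
Definition restr (K : {set 'I_l * 'I_m}) (x : 'M[L]_(l, m)) : 'M[L]_(l, m) :=
  \matrix_(i, s) (if (i, s) \in K then x i s else 0).

Fact restr_is_semilinear K : semilinear (restr K).
Proof.
by split=> [a x|x y]; apply/matrixP => i s; rewrite !mxE;
  case: ifP; rewrite ?mulr0 ?addr0.
Qed.
HB.instance Definition _ K :=
  GRing.isSemilinear.Build L 'M[L]_(l, m) 'M[L]_(l, m) _ (restr K)
    (restr_is_semilinear K).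

Fact puncture_is_semilinear E : semilinear (@puncture L l m E).
Proof.
by split=> [a x|x y]; apply/matrixP => i s; rewrite !mxE;
  case: ifP; rewrite ?mulr0 ?addr0.
Qed.
HB.instance Definition _ E :=
  GRing.isSemilinear.Build L 'M[L]_(l, m) 'M[L]_(l, m) _ (@puncture L l m E)
    (puncture_is_semilinear E).

Lemma restrE K x : restr K x = \sum_(d in K) x d.1 d.2 *: delta_mx d.1 d.2.
Proof.
apply/matrixP => i s; rewrite mxE summxE.
have dE : forall d : 'I_l * 'I_m, (x d.1 d.2 *: delta_mx d.1 d.2 : 'M[L]_(l, m)) i s
   = if d == (i, s) then x i s else 0.
  move=> [a b]; rewrite !mxE /= xpair_eqE.
  rewrite [i == a]eq_sym [s == b]eq_sym.
  by case: andP => [[/eqP -> /eqP ->]|_]; rewrite ?mulr1 ?mulr0.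
under eq_bigr => d _ do rewrite dE.
case: ifP => iK.
  rewrite (bigD1 (i, s)) //= eqxx big1 ?addr0 //.
  by move=> d /andP [_ /negbTE ->].
by rewrite big1 // => d dK; case: eqP => // e; rewrite -e dK in iK.
Qed.

Lemma restr_span K x :
  restr K x \in <<[seq delta_mx d.1 d.2 | d in K]>>%VS.
Proof.
rewrite restrE; apply: memv_suml => d dK; apply: memvZ; apply: memv_span.
by apply: map_f; rewrite mem_enum.
Qed.

Lemma dim_restr_img K (U : {vspace 'M[L]_(l, m)}) :
  (\dim (linfun (restr K) @: U) <= #|K|)%N.
Proof.
rewrite -(size_image (fun d => delta_mx d.1 d.2 : 'M[L]_(l, m)) K).
apply: leq_trans (dim_span _); apply: dimvS; apply/subvP => y /memv_imgP [x _ ->]; rewrite lfunE.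
exact: restr_span.
Qed.

Lemma restr_ker K (U : {vspace 'M[L]_(l, m)}) : (#|K| < \dim U)%N ->
  exists2 x, x \in U & x != 0 /\ restr K x = 0.
Proof.
move=> hK.
have := limg_ker_dim (linfun (restr K)) U.
have := dim_restr_img K U.
move=> h1 h2.
have : (U :&: lker (linfun (restr K)))%VS != 0%VS.
  rewrite -dimv_eq0; apply/eqP => h0; move: h2; rewrite h0 add0n => h3.
  by move: hK; rewrite -h3 ltnNge h1.
rewrite -vpick0 => nz.
have := memv_pick (U :&: lker (linfun (restr K)))%VS.
rewrite memv_cap memv_ker lfunE => /andP [xU /eqP xk].
by exists (vpick (U :&: lker (linfun (restr K)))%VS).
Qed.

Lemma restr_inj_dim K (U : {vspace 'M[L]_(l, m)}) :
  (forall x, x \in U -> restr K x = 0 -> x = 0) -> (\dim U <= #|K|)%N.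
Proof.
move=> inj; rewrite leqNgt; apply/negP => /restr_ker [x xU [nx rx]].
by move: nx; rewrite (inj x xU rx) eqxx.
Qed.

Lemma weight_sub (y : 'M[L]_(l, m)) (Z : {set 'I_l * 'I_m}) :
  (forall c, c \notin Z -> y c.1 c.2 = 0) -> (weight y <= #|Z|)%N.
Proof.
move=> hz; apply: subset_leq_card; apply/subsetP => c; rewrite inE.
by apply: contraR => /hz ->; rewrite eqxx.
Qed.
End Restr.
Arguments restr {L l m} K x.
Arguments restrE {L l m} K x.
Arguments restr_span {L l m} K x.
Arguments dim_restr_img {L l m} K U.
Arguments restr_ker {L l m} K U.
Arguments restr_inj_dim {L l m} K U.
Arguments weight_sub {L l m} y Z.
Arguments exists_subset {T A n}.

Lemma mulrn_odd (R : nzRingType) (x : R) n : 2%N \in [pchar R] ->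
  x *+ n = x *+ odd n.
Proof.
move=> ch; rewrite -{1}(odd_double_half n) mulrnDr -muln2 mulrnA.
by rewrite (mulrn_pchar ch) addr0.
Qed.

Section Code.
Variables (F : finFieldType) (L : fieldExtType F) (r h l : nat)
  (xi : 'I_r.+1 -> F) (lam : 'I_l -> L).
Hypothesis chF : 2%N \in [pchar F].
Hypothesis xi_inj : injective xi.
Hypothesis xi_wi : weakly_indep (if odd h then h.+1 else h) [set xi s | s : 'I_r.+1].
Hypothesis lam_wi : wise_indep h lam.

Lemma chL : 2%N \in [pchar L]. Proof. by rewrite (pchar_lalg L). Qed.

Local Notation M := 'M[L]_(l, r.+1).
Local Notation pos := ('I_l * 'I_r.+1)%type.

Definition heavy (j : nat) (x : M) : L :=
  \sum_(i < l) \sum_(s < r.+1) (lam i * (xi s)%:A) ^+ (2 ^ j) * x i s.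

Definition phi (x : M) : 'rV[L]_(h + l) :=
  \row_q match split q with
         | inl j => heavy j x | inr i => \sum_(s < r.+1) x i s end.

Fact phi_is_semilinear : semilinear phi.
Proof.
split=> [a x|x y]; apply/rowP => q; rewrite !mxE; case: split => [j|i];
  rewrite /heavy.
- rewrite mulr_sumr; apply: eq_bigr => i _; rewrite mulr_sumr.
  by apply: eq_bigr => s _; rewrite mxE mulrCA.
- by rewrite mulr_sumr; apply: eq_bigr => s _; rewrite mxE.
- rewrite -big_split; apply: eq_bigr => i _; rewrite -big_split.
  by apply: eq_bigr => s _; rewrite mxE mulrDr.
- by rewrite -big_split; apply: eq_bigr => s _; rewrite mxE.
Qed.
HB.instance Definition _ :=
  GRing.isSemilinear.Build L M 'rV[L]_(h + l) _ phi phi_is_semilinear.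

Definition Cc : {vspace M} := lker (linfun phi).

Lemma memC x : x \in Cc <->
  (forall j : 'I_h, heavy j x = 0) /\ (forall i, \sum_(s < r.+1) x i s = 0).
Proof.
rewrite memv_ker lfunE; split.
  move/eqP => e; split => [j|i].
    by have := congr1 (fun v : 'rV_(h + l) => v 0 (unsplit (inl j))) e;
      rewrite !mxE unsplitK.
  by have := congr1 (fun v : 'rV_(h + l) => v 0 (unsplit (inr i))) e;
    rewrite !mxE unsplitK.
case=> hj hi; apply/eqP/rowP => q; rewrite !mxE.
by case: split => [j|i]; [apply: hj | apply: hi].
Qed.

Definition NE (E : 'I_l -> 'I_r.+1) : {set pos} := [set c | c.2 != E c.1].
Definition beta E (c : pos) : L := lam c.1 * (xi c.2 + xi (E c.1))%:A.

Lemma card_NE E : #|NE E| = (l * r)%N.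
Proof.
have -> : NE E = ~: [set (i, E i) | i : 'I_l].
  apply/setP => [[a b]]; rewrite !inE /=; apply/idP/idP.
    move=> nb; apply/imsetP => [[i _ [ea eb]]].
    by rewrite eb ea eqxx in nb.
  move=> hn; apply/eqP => eb; apply: (negP hn); apply/imsetP.
  by exists a => //; rewrite eb.
have := cardsC [set (i, E i) | i : 'I_l].
rewrite card_imset; last by move=> i j [].
rewrite card_prod !card_ord mulnS => /eqP; rewrite eqn_add2l => /eqP //.
Qed.

Lemma C_local E x : x \in Cc -> forall i, x i (E i) = \sum_(s | s != E i) x i s.
Proof.
case/memC => _ hi i; have := hi i; rewrite (bigD1 (E i)) //= => /eqP.
by rewrite addr_eq0 => /eqP ->; rewrite (oppr_pchar2 chL).
Qed.

Lemma C_heavyE E x : x \in Cc -> forall j : 'I_h,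
  \sum_(c in NE E) beta E c ^+ (2 ^ j) * x c.1 c.2 = 0.
Proof.
move=> xC j; case/memC: (xC) => hj _; rewrite -[RHS](hj j) /heavy.
have -> : \sum_(c in NE E) beta E c ^+ (2 ^ j) * x c.1 c.2 =
    \sum_i \sum_(s | s != E i) beta E (i, s) ^+ (2 ^ j) * x i s.
  rewrite pair_big_dep; apply: eq_big => [[a b]|[a b] _] //.
  by rewrite inE.
apply: eq_bigr => i _; rewrite [RHS](bigD1 (E i)) //= (@C_local E x xC) mulr_sumr.
rewrite -big_split /=; apply: eq_bigr => s _.
rewrite -mulrDl /beta /= scalerDl mulrDr (frobD _ chL) addrC.
by [].
Qed.

Lemma beta_indep E (U : {set pos}) : U \subset NE E -> (#|U| <= h)%N ->
  U != set0 -> \sum_(c in U) beta E c != 0.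
Proof.
move=> UNE Uh U0; apply/negP => /eqP s0.
pose e i : F := \sum_(s | (i, s) \in U) (xi s + xi (E i)).
pose T := [set c.1 | c in U].
have sumE : \sum_(c in U) beta E c = \sum_(i in T) e i *: lam i.
  transitivity (\sum_i e i *: lam i).
    rewrite /e; under [RHS]eq_bigr => i _ do rewrite scaler_suml.
    rewrite pair_big_dep /=; apply: eq_big => [[a b]|[a b] _] //=.
    by rewrite /beta /= mulr_algr.
  rewrite [RHS]big_mkcond; apply: eq_bigr => i _; case: ifP => // iT.
  rewrite /e big_pred0 ?scale0r // => s; apply/negP => iU.
  by move/negP: iT; apply; apply/imsetP; exists (i, s).
have Th : (#|T| <= h)%N := leq_trans (leq_imset_card _ _) Uh.
have e0 := @free_coef _ _ _ lam T e (lam_wi _ Th) (etrans (esym sumE) s0).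
case/set0Pn: U0 => c0 c0U.
set i0 := c0.1.
have i0T : i0 \in T by apply/imsetP; exists c0.
have ei0 := e0 i0 i0T.
pose V := [set s | (i0, s) \in U].
have EV : E i0 \notin V.
  rewrite inE; apply/negP => hU; have := subsetP UNE _ hU.
  by rewrite inE /= eqxx.
have V0 : c0.2 \in V by rewrite inE /i0 -surjective_pairing.
have Vpos : (0 < #|V|)%N by apply/card_gt0P; exists c0.2.
have Vh : (#|V| <= h)%N.
  apply: leq_trans Uh; rewrite -(card_imset V (fun s t (e : (i0, s) = (i0, t)) => 
     f_equal snd e)).
  by apply: subset_leq_card; apply/subsetP => c /imsetP [s sV ->]; rewrite inE in sV.
have eE : e i0 = \sum_(s in V) xi s + xi (E i0) *+ odd #|V|.
  rewrite -(@mulrn_odd _ (xi (E i0)) #|V| chF) -sumr_const -big_split /=.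
  by apply: eq_bigl => s; rewrite inE.
set t := if odd h then h.+1 else h.
have ht : (h <= t)%N by rewrite /t; case: ifP.
case oV : (odd #|V|) eE => eE.
- pose W := [set xi s | s in E i0 |: V].
  have hsub : W \subset [set xi s | s : 'I_r.+1].
    by apply/subsetP => x /imsetP [s _ ->]; apply: imset_f.
  have h2 : (2 <= #|W|)%N by rewrite card_imset // cardsU1 EV.
  have h3 : (#|W| <= t)%N.
    rewrite card_imset // cardsU1 EV /t add1n.
    case: ifP => oh //; rewrite ltn_neqAle Vh andbT.
    by apply/negP => /eqP eq; rewrite eq oh in oV.
  have := xi_wi _ hsub h2 h3.
  rewrite big_imset /=; last by move=> a b _ _; apply: xi_inj.
  move: eE; rewrite /= mulr1n => eE.
  by rewrite (big_setU1 _ EV) /= addrC -eE ei0 eqxx.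
- pose W := [set xi s | s in V].
  have hsub : W \subset [set xi s | s : 'I_r.+1].
    by apply/subsetP => x /imsetP [s _ ->]; apply: imset_f.
  have h2 : (2 <= #|W|)%N.
    by rewrite card_imset //; move: Vpos oV; case: #|V| => [|[|n]].
  have h3 : (#|W| <= t)%N by rewrite card_imset // (leq_trans Vh ht).
  have := xi_wi _ hsub h2 h3.
  rewrite big_imset /=; last by move=> a b _ _; apply: xi_inj.
  by rewrite -[X in X != 0]addr0 -[X in _ + X != 0](mulr0n (xi (E i0))) -eE ei0 eqxx.
Qed.
Lemma pun_inj E x : x \in Cc -> puncture E x = 0 -> x = 0.
Proof.
move=> xC px.
have z : forall i s, s != E i -> x i s = 0.
  move=> i s ns; have := congr1 (fun y : M => y i s) px.
  by rewrite !mxE (negbTE ns).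
apply/matrixP => i s; rewrite mxE.
case: (eqVneq s (E i)) => [->|ns]; last exact: z.
by rewrite (@C_local E x xC) big1 // => s' ; apply: z.
Qed.

Lemma pun_weight E x : x \in Cc -> puncture E x != 0 ->
  (h < weight (puncture E x))%N.
Proof.
move=> xC ny; rewrite ltnNge; apply/negP => wh.
set y := puncture E x in ny wh.
pose S := [set c : pos | y c.1 c.2 != 0].
have wS : weight y = #|S| by [].
have yE : forall c : pos, c \in NE E -> y c.1 c.2 = x c.1 c.2.
  by move=> c; rewrite inE mxE => /negbTE ->.
have SNE : S \subset NE E.
  apply/subsetP => c; rewrite !inE mxE; case: ifP => //.
  by rewrite eqxx.
have [c cS] : exists c, c \in S.
  apply/set0Pn; apply: contra ny => /eqP S0; apply/eqP/matrixP => i s.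
  apply/eqP; rewrite [X in _ == X]mxE; apply: contraT => nz.
  have : (i, s) \in S by rewrite inE.
  by rewrite S0 inE.
have cN := subsetP SNE c cS.
suff xc0 : x c.1 c.2 = 0 by move: cS; rewrite inE yE // xc0 eqxx.
apply: (@moore_set L _ S (beta E) chL _ (fun c => x c.1 c.2) _ c cS).
- move=> U US U0; apply: beta_indep => //.
  + exact: subset_trans US SNE.
  + by apply: leq_trans (subset_leq_card US) _; rewrite -wS.
- move=> j hj.
  have jh : (j < h)%N by apply: leq_trans hj _; rewrite -wS.
  rewrite -[RHS](@C_heavyE E x xC (Ordinal jh)) /=.
  rewrite [RHS](big_setID S) /= (setIidPr SNE) [X in _ = _ + X]big1 ?addr0.
    by apply: eq_bigr => d _; rewrite mulrC.
  move=> d; rewrite !inE => /andP [dS dNE].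
  have := yE d; rewrite inE dNE => /(_ isT) <-.
  by move: dS; rewrite negbK => /eqP ->; rewrite mulr0.
Qed.

Lemma restr_inj_NE E (D : {set pos}) : D \subset NE E ->
  (#|NE E| - #|D| <= h)%N ->
  forall x, x \in Cc -> restr D x = 0 -> x = 0.
Proof.
move=> DNE hD x xC rx; apply: (@pun_inj E x xC); apply/eqP.
apply: contraT => ny; have := @pun_weight E x xC ny.
rewrite ltnNge; suff -> : (weight (puncture E x) <= h)%N by [].
apply: leq_trans hD.
have -> : (#|NE E| - #|D| = #|NE E :\: D|)%N by rewrite cardsD (setIidPr DNE).
apply: weight_sub => c; rewrite !inE negb_and negbK => /orP [cD|cN].
  have := congr1 (fun z : M => z c.1 c.2) rx; rewrite !mxE -surjective_pairing cD => ->.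
  by case: ifP.
by move: cN; rewrite negbK => cN; rewrite mxE cN.
Qed.

Lemma pun_weight_restr E (K : {set pos}) (x : M) : K \subset NE E -> restr K x = 0 ->
  (weight (puncture E x) <= #|NE E| - #|K|)%N.
Proof.
move=> KNE rx.
have -> : (#|NE E| - #|K| = #|NE E :\: K|)%N by rewrite cardsD (setIidPr KNE).
apply: weight_sub => c; rewrite !inE negb_and negbK => /orP [cD|cN].
  have := congr1 (fun z : M => z c.1 c.2) rx; rewrite !mxE -surjective_pairing cD => ->.
  by case: ifP.
by move: cN; rewrite negbK => cN; rewrite mxE cN.
Qed.

Lemma dimC k : (l * r = k + h)%N -> \dim Cc = k.
Proof.
move=> hk; apply/eqP; rewrite eqn_leq; apply/andP; split.
  pose p := fun _ : 'I_l => (ord0 : 'I_r.+1).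
  have kN : (k <= #|NE p|)%N by rewrite card_NE hk leq_addr.
  have [D [DNE cD]] := exists_subset kN.
  rewrite -cD; apply: restr_inj_dim => x xC rx.
  by apply: (@restr_inj_NE p D DNE _ x xC rx); rewrite card_NE cD hk addKn.
have := limg_ker_dim (linfun phi) fullv.
rewrite capfv -/Cc dimvf dim_matrix.
have : (\dim (linfun phi @: fullv) <= h + l)%N.
  by apply: leq_trans (dimvS (subvf _)) _; rewrite dimvf dim_matrix; lia.
move=> h1 h2; have h3 : (l * r.+1 = l * r + l)%N by rewrite mulnS addnC.
have h4 : (\dim Cc + \dim (limg (linfun phi)) = l * r.+1)%N := h2.
lia.
Qed.

Lemma sys k E (D : {set pos}) : (l * r = k + h)%N -> D \subset NE E -> #|D| = k ->
  forall y : M, exists! x, x \in Cc /\ forall c, c \in D -> x c.1 c.2 = y c.1 c.2.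
Proof.
move=> hk DNE cD.
have hD : (#|NE E| - #|D| <= h)%N by rewrite card_NE cD hk addKn.
have inj := @restr_inj_NE E D DNE hD.
move=> y.
have eqS : (linfun (restr D) @: Cc)%VS = <<[seq delta_mx d.1 d.2 | d in D]>>%VS.
  apply/eqP; rewrite eqEdim; apply/andP; split.
    by apply/subvP => z /memv_imgP [x _ ->]; rewrite lfunE; apply: restr_span.
  rewrite limg_dim_eq.
    by rewrite (dimC _ hk) -cD -[X in (_ <= X)%N](size_image (fun d => delta_mx d.1 d.2 : M) D) dim_span.
  apply/eqP; rewrite -subv0; apply/subvP => x; rewrite memv_cap memv_ker lfunE memv0.
  by case/andP => xC /eqP rx; apply/eqP; apply: inj.
have := restr_span D y; rewrite -eqS => /memv_imgP [x xC].
rewrite lfunE => ex.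
exists x; split.
  split => // c cD'; have := congr1 (fun z : M => z c.1 c.2) ex.
  by rewrite !mxE -surjective_pairing cD'.
move=> x' [x'C hx']; apply/eqP; rewrite -subr_eq0; apply/eqP.
apply: inj; first by apply: memvB.
apply/matrixP => i s; rewrite !mxE; case: ifP => // iD.
have := congr1 (fun z : M => z i s) ex; rewrite !mxE iD => <-.
by rewrite (hx' (i, s) iD) subrr.
Qed.

Lemma parities k E (D : {set pos}) : (l * r = k + h)%N -> D \subset NE E -> #|D| = k ->
  forall c : pos, exists w : pos -> L, forall x, x \in Cc ->
    x c.1 c.2 = \sum_(d in D) w d * x d.1 d.2.
Proof.
move=> hk DNE cD c.
have [u hu] : exists u : pos -> M, forall d, u d \in Cc /\
    forall c', c' \in D -> u d c'.1 c'.2 = (delta_mx d.1 d.2 : M) c'.1 c'.2.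
  apply: (@fin_all_exists _ (fun _ => M) (fun d ud => ud \in Cc /\ forall c', c' \in D -> ud c'.1 c'.2 = (delta_mx d.1 d.2 : M) c'.1 c'.2)) => d.
  have [x [hx _]] := @sys k E D hk DNE cD (delta_mx d.1 d.2).
  by exists x.
exists (fun d => u d c.1 c.2) => x xC.
have [x0 [_ un]] := @sys k E D hk DNE cD x.
pose z := \sum_(d in D) x d.1 d.2 *: u d.
have zC : z \in Cc by apply: memv_suml => d _; apply: memvZ; case: (hu d).
have zD : forall c', c' \in D -> z c'.1 c'.2 = x c'.1 c'.2.
  move=> c' c'D; have := congr1 (fun m : M => m c'.1 c'.2) (restrE D x).
  rewrite mxE -surjective_pairing c'D => ->; rewrite !summxE.
  by apply: eq_bigr => d dD; rewrite !mxE ((hu d).2 c' c'D) mxE.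
have ex : x = z.
  by rewrite -(un x (conj xC (fun _ _ => erefl))) (un z (conj zC zD)).
by rewrite {1}ex summxE; apply: eq_bigr => d _; rewrite mxE mulrC.
Qed.

Lemma main_sec k : (l * r = k + h)%N -> (0 < k)%N ->
  exists C : {vspace 'M[L]_(l, r.+1)},
    (forall x : 'M[L]_(l, r.+1), x \in C <->
       ((forall j : 'I_h,
           \sum_(i < l) \sum_(s < r.+1)
              (lam i * (xi s)%:A) ^+ (2 ^ j) * x i s = 0) /\
        (forall i : 'I_l, \sum_(s < r.+1) x i s = 0))) /\
    MR_local_code k r h C.
Proof.
move=> hk k0; exists Cc; split; first by move=> x; apply: memC.
split.
  split; first done; split; first exact: dimC hk.
  pose p := fun _ : 'I_l => (ord0 : 'I_r.+1).
  have kN : (k <= #|NE p|)%N by rewrite card_NE hk leq_addr.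
  have [D [DNE cD]] := exists_subset kN.
  exists p, D; split; first done.
  split; first by move=> c /(subsetP DNE); rewrite inE.
  split; first exact: sys hk DNE cD.
  split; first by move=> c _ _; apply: (@parities k p D hk DNE cD c).
  by move=> x xC i; apply: C_local.
move=> E; exists (linfun (puncture E) @: Cc)%VS.
have kerE : (Cc :&: lker (linfun (puncture E)))%VS = 0%VS.
  apply/eqP; rewrite -subv0; apply/subvP => x; rewrite memv_cap memv0.
  case/andP => xC; rewrite memv_ker lfunE => /eqP px; apply/eqP.
  exact: (@pun_inj E x xC px).
split.
  move=> y; split; first by case/memv_imgP => x xC ->; exists x; rewrite ?lfunE.
  by case=> x xC ->; have := memv_img (linfun (puncture E)) xC; rewrite lfunE.
split; first by rewrite limg_dim_eq // (dimC _ hk).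
split.
  have kN : (k.-1 <= #|NE E|)%N by rewrite card_NE hk; lia.
  have [K [KNE cK]] := exists_subset kN.
  have hK : (#|K| < \dim Cc)%N by rewrite cK (dimC _ hk); lia.
  case: (restr_ker K Cc hK) => x xC [nx rx].
  exists (puncture E x); split.
    by have := memv_img (linfun (puncture E)) xC; rewrite lfunE.
  have ny : puncture E x != 0.
    by apply: contra nx => /eqP px; apply/eqP; apply: (@pun_inj E x xC).
  split; first done.
  apply/eqP; rewrite eqn_leq (@pun_weight E x xC ny) andbT.
  apply: leq_trans (@pun_weight_restr E K x KNE rx) _.
  rewrite card_NE cK hk; lia.
move=> y /memv_imgP [x xC ->]; rewrite lfunE => ny.
exact: (@pun_weight E x xC ny).
Qed.

End Code.

Theorem proposition14 (F : finFieldType) (L : fieldExtType F)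
    (k r h a b l : nat) (xi : 'I_r.+1 -> F) (lam : 'I_l -> L) :
  (0 < k)%N -> (0 < r)%N -> (0 < h)%N -> (l * r = k + h)%N ->
  (0 < a)%N -> (0 < b)%N -> #|F| = (2 ^ a)%N -> b = (a * \dim {:L})%N ->
  injective xi ->
  weakly_indep (if odd h then h.+1 else h) [set xi s | s : 'I_r.+1] ->
  injective lam ->
  wise_indep h lam ->
  exists C : {vspace 'M[L]_(l, r.+1)},
    (forall x : 'M[L]_(l, r.+1), x \in C <->
       ((forall j : 'I_h,
           \sum_(i < l) \sum_(s < r.+1)
              (lam i * (xi s)%:A) ^+ (2 ^ j) * x i s = 0) /\
        (forall i : 'I_l, \sum_(s < r.+1) x i s = 0))) /\
    MR_local_code k r h C.
Proof.
move=> k0 _ _ hk _ _ cF _ xinj xwi _ lwi.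
have chF : (2 \in [pchar F])%N := card_finPcharP cF (erefl true).
exact: (@main_sec F L r h l xi lam chF xinj xwi lwi k hk k0).
Qed.
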